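(* For every $k\in\mathbb{N}$, the graph $\mathcal{T}_k$ has treewidth at most $k$ and contains every graph of treewidth at most $k$; that is, $\mathcal{T}_k$ is universal for the class of graphs with treewidth at most $k$.
   Context: All graphs are simple and countable; $G$ contains $H$ if $H$ is isomorphic to a subgraph of $G$. A tree-decomposition of $G$ is a family of bags $(B_x\subseteq V(G):x\in V(T))$ indexed by a tree $T$ such that every edge has both ends in some bag and, for every vertex $v$, $\{x:v\in B_x\}$ induces a nonempty subtree of $T$; its width is the maximum bag size minus one (bags bounded); treewidth is the minimum width. Let $\mathcal{T}$ be the tree whose vertices are all finite sequences $(x_1,\dots,x_n)$ with $n\ge 0$, $x_i\in\mathbb{N}$, where $(x_1,\dots,x_n)$ is adjacent to $(x_1,\dots,x_n,x_{n+1})$, rooted at the empty sequence (ancestor = prefix). Let $c:V(\mathcal{T})\to\{0,\dots,k\}$ be a colouring such that every vertex of colour $i$ has infinitely many children of each colour in $\{0,\dots,k\}\setminus\{i\}$. $\mathcal{T}_k$ is the graph on $V(\mathcal{T})$ in which $vw$ is an edge iff $v$ is a proper ancestor of $w$ and $v$ is the only vertex on the $v$–$w$ path of $\mathcal{T}$ with colour $c(v)$. *)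

(* Defs.v *)
From Stdlib Require Import List Arith.
Import ListNotations.

Fixpoint walk {X : Type} (R : X -> X -> Prop) (p : list X) : Prop :=
  match p with
  | x :: ((y :: _) as q) => R x y /\ walk R q
  | _ => True
  end.

Definition simple_graph {V : Type} (adj : V -> V -> Prop) : Prop :=
  (forall u v, adj u v -> adj v u) /\ (forall v, ~ adj v v).

Definition countable_type (V : Type) : Prop :=
  exists f : V -> nat, forall u v, f u = f v -> u = v.

Definition connected_on {X : Type} (R : X -> X -> Prop) (S : X -> Prop) : Prop :=
  forall x y, S x -> S y ->
    exists p, walk R (x :: p) /\ Forall S p /\ last p x = y.

Definition acyclic {X : Type} (R : X -> X -> Prop) : Prop :=
  forall x p, NoDup (x :: p) -> 2 <= length p -> walk R (x :: p) ->
    ~ R (last p x) x.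

Definition is_tree {X : Type} (R : X -> X -> Prop) : Prop :=
  inhabited X /\ simple_graph R /\ connected_on R (fun _ => True) /\ acyclic R.

Definition tree_decomposition {V X : Type} (adj : V -> V -> Prop)
    (R : X -> X -> Prop) (B : X -> V -> Prop) : Prop :=
  is_tree R /\
  (forall u v, adj u v -> exists x, B x u /\ B x v) /\
  (forall v, (exists x, B x v) /\ connected_on R (fun x => B x v)).

(* every bag has at most k+1 elements, i.e. width <= k *)
Definition bags_bounded {V X : Type} (B : X -> V -> Prop) (k : nat) : Prop :=
  forall x, exists l : list V, length l <= k + 1 /\ forall v, B x v -> In v l.

Definition treewidth_le {V : Type} (adj : V -> V -> Prop) (k : nat) : Prop :=
  exists (X : Type) (R : X -> X -> Prop) (B : X -> V -> Prop),
    tree_decomposition adj R B /\ bags_bounded B k.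

Definition contains {VG VH : Type} (adjG : VG -> VG -> Prop)
    (adjH : VH -> VH -> Prop) : Prop :=
  exists f : VH -> VG, (forall u v, f u = f v -> u = v) /\
    (forall u v, adjH u v -> adjG (f u) (f v)).

(* The tree 𝒯: vertices are finite sequences of naturals; ancestor = prefix *)
Definition prefix (v w : list nat) : Prop := exists t, w = v ++ t.
Definition proper_prefix (v w : list nat) : Prop := exists t, t <> [] /\ w = v ++ t.

(* admissible colourings c : V(𝒯) -> {0..k}: every vertex of colour i has
   infinitely many children of each colour j <> i *)
Definition good_colouring (k : nat) (c : list nat -> nat) : Prop :=
  (forall s, c s <= k) /\
  (forall s j, j <= k -> j <> c s -> forall N, exists x, N <= x /\ c (s ++ [x]) = j).

(* v w is an edge (v the ancestor): v proper ancestor of w and v is the only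
   vertex on the v-w path of 𝒯 (= prefixes u of w extending v) of colour c v *)
Definition Tk_arc (c : list nat -> nat) (v w : list nat) : Prop :=
  proper_prefix v w /\
  (forall u, prefix v u -> prefix u w -> u <> v -> c u <> c v).

Definition Tk_adj (c : list nat -> nat) (v w : list nat) : Prop :=
  Tk_arc c v w \/ Tk_arc c w v.

(* Main.v *)
Require Import Defs.
From Stdlib Require Import List Arith Lia Classical ClassicalEpsilon FunctionalExtensionality Permutation.
Import ListNotations.

Lemma last_cons {X} (b : X) l d : last (b :: l) d = last l b.
Proof.
  revert b d; induction l as [|c l IH]; intros b d; [reflexivity|].
  change (last (c :: l) d = last (c :: l) b). rewrite !IH. reflexivity.
Qed.

Lemma last_app {X} (l1 l2 : list X) d : last (l1 ++ l2) d = last l2 (last l1 d).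
Proof.
  revert d; induction l1 as [|a l1 IH]; intros d; [reflexivity|].
  rewrite <- app_comm_cons, !last_cons. apply IH.
Qed.

Lemma last_in {X} (b : X) l d : In (last (b :: l) d) (b :: l).
Proof.
  revert b d; induction l as [|c l IH]; intros b d; [simpl; auto|].
  rewrite last_cons. right. apply IH.
Qed.

Lemma walk_app {X} (R : X -> X -> Prop) l1 a l2 :
  walk R (a :: l1 ++ l2) <-> walk R (a :: l1) /\ walk R (last l1 a :: l2).
Proof.
  revert a; induction l1 as [|b l1 IH]; intros a.
  - simpl. tauto.
  - rewrite last_cons, <- app_comm_cons.
    change (walk R (a :: b :: (l1 ++ l2))) with (R a b /\ walk R (b :: l1 ++ l2)).
    change (walk R (a :: b :: l1)) with (R a b /\ walk R (b :: l1)).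
    rewrite IH. tauto.
Qed.

Lemma walk_snoc {X} (R : X -> X -> Prop) l a y :
  walk R (a :: l ++ [y]) <-> walk R (a :: l) /\ R (last l a) y.
Proof. rewrite walk_app. simpl. tauto. Qed.

Lemma walk_rev {X} (R : X -> X -> Prop) :
  (forall u v, R u v -> R v u) -> forall l, walk R l -> walk R (rev l).
Proof.
  intros Hs l. induction l as [|a l IH]; [simpl; auto|].
  intros Hw. change (rev (a :: l)) with (rev l ++ [a]).
  destruct l as [|b l]; [simpl; auto|].
  destruct Hw as [Hab Hw]. specialize (IH Hw).
  change (rev (b :: l)) with (rev l ++ [b]) in IH |- *.
  destruct (rev l ++ [b]) as [|c m] eqn:E.
  - destruct (rev l); discriminate.
  - apply (proj2 (walk_snoc R m c a)). split; auto.
    rewrite <- (last_cons c m c), <- E, last_last. apply Hs; auto.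
Qed.

Section Walks.
Context {X : Type} (R : X -> X -> Prop).

Definition wk (S : X -> Prop) (x y : X) : Prop :=
  exists p, walk R (x :: p) /\ Forall S p /\ last p x = y.

Lemma wk_refl S x : wk S x x.
Proof. exists []. simpl. auto. Qed.

Lemma wk_trans S x y z : wk S x y -> wk S y z -> wk S x z.
Proof.
  intros [p1 [W1 [F1 L1]]] [p2 [W2 [F2 L2]]].
  exists (p1 ++ p2). split; [|split].
  - apply walk_app. rewrite L1. auto.
  - apply Forall_app; auto.
  - rewrite last_app, L1. auto.
Qed.

Lemma wk_step S x y : R x y -> S y -> wk S x y.
Proof. intros. exists [y]. simpl. auto. Qed.

Lemma wk_sym S x y : (forall u v, R u v -> R v u) -> S x -> wk S x y -> wk S y x.
Proof.
  intros Hs Sx [p [W [F L]]]. revert x Sx W L. induction p as [|b p IH]; intros x Sx W L.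
  - simpl in L. subst. apply wk_refl.
  - destruct W as [Rxb W]. inversion F; subst.
    apply wk_trans with b.
    + apply IH; auto. rewrite <- (last_cons b p x). auto.
    + apply wk_step; auto.
Qed.

Lemma walk_tl (x : X) l : walk R (x :: l) -> walk R l.
Proof. destruct l; simpl; tauto. Qed.

Lemma walk_suffix u l : walk R (u ++ l) -> walk R l.
Proof. induction u as [|x u IH]; simpl; auto. intros W. apply IH. apply (walk_tl x). exact W. Qed.

Lemma shorten p a : walk R (a :: p) -> exists q, walk R (a :: q) /\ NoDup (a :: q) /\
   last q a = last p a /\ incl q p.
Proof.
  revert a; induction p as [|b p IH]; intros a W.
  - exists []. repeat split; auto. constructor; auto. constructor. intros x [].
  - destruct W as [Rab W]. destruct (IH b W) as [q [Wq [Nq [Lq Iq]]]].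
    destruct (classic (In a (b :: q))) as [Hin|Hnin].
    + destruct (in_split _ _ Hin) as [u [v E]].
      exists v. rewrite E in Wq, Nq. split; [|split;[|split]].
      * apply (walk_suffix u). exact Wq.
      * apply (NoDup_app_remove_l u). exact Nq.
      * rewrite last_cons, <- Lq. rewrite <- (last_cons b q b), E, last_app, last_cons. reflexivity.
      * intros y Hy. assert (In y (b :: q)) as H' by (rewrite E; apply in_or_app; right; right; auto).
        destruct H' as [<-|H']; [left; auto|right; auto].
    + exists (b :: q). split; [|split;[|split]].
      * simpl. split; auto.
      * constructor; auto.
      * rewrite !last_cons. auto.
      * intros y [<-|Hy]; [left;auto|right;auto].
Qed.
End Walks.

Lemma first_common {X} (m1 m2 : list X) : (exists z, In z m1 /\ In z m2) ->
  exists s z t, m1 = s ++ z :: t /\ In z m2 /\ (forall y, In y s -> ~ In y m2).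
Proof.
  induction m1 as [|a m1 IH]; intros [z [Hz1 Hz2]]; [destruct Hz1|].
  destruct (classic (In a m2)) as [Ha|Ha].
  - exists [], a, m1. simpl. repeat split; auto.
  - destruct Hz1 as [<-|Hz1]; [contradiction|].
    destruct IH as [s [z' [t [E [I D]]]]]; [eauto|].
    exists (a :: s), z', t. subst. repeat split; auto.
    intros y [<-|Hy]; auto.
Qed.

Lemma path_unique {X} (R : X -> X -> Prop) : (forall u v, R u v -> R v u) -> acyclic R ->
  forall m1 a m2, walk R (a :: m1) -> walk R (a :: m2) -> NoDup (a :: m1) -> NoDup (a :: m2) ->
  last m1 a = last m2 a -> m1 = m2.
Proof.
  intros Hs Hac m1. induction m1 as [|b1 n1 IH]; intros a m2 W1 W2 N1 N2 L.
  - destruct m2 as [|b2 n2]; auto. exfalso. simpl in L.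
    inversion N2; subst. apply H1. rewrite L at 1. apply last_in.
  - destruct m2 as [|b2 n2].
    + exfalso. simpl in L. inversion N1; subst. apply H1. rewrite <- L at 1. apply last_in.
    + destruct (classic (b1 = b2)) as [<-|Hne].
      * f_equal. apply (IH b1).
        -- exact (proj2 W1).
        -- exact (proj2 W2).
        -- inversion N1; auto.
        -- inversion N2; auto.
        -- rewrite <- (last_cons b1 n1 a), <- (last_cons b1 n2 a). auto.
      * exfalso. set (m1 := b1 :: n1) in *. set (m2 := b2 :: n2) in *.
        destruct (first_common m1 m2) as [s [z [t [E1 [Iz D]]]]].
        { exists (last m1 a). split; [apply last_in|]. rewrite L. apply last_in. }
        destruct (in_split _ _ Iz) as [u [v E2]].
        inversion N1 as [|? ? Na1 N1']; subst. inversion N2 as [|? ? Na2 N2']; subst.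
        assert (Wc : walk R (a :: s ++ z :: rev u) /\ R (last (s ++ z :: rev u) a) a).
        { assert (W1' : walk R (a :: (s ++ [z]) ++ t)) by (rewrite <- app_assoc; simpl; rewrite <- E1; exact W1).
          apply walk_app in W1'. destruct W1' as [W1a _].
          assert (W2' : walk R (a :: (u ++ [z]) ++ v)) by (rewrite <- app_assoc; simpl; rewrite <- E2; exact W2).
          apply walk_app in W2'. destruct W2' as [W2a _].
          apply (walk_rev R Hs) in W2a. simpl in W2a. rewrite rev_app_distr in W2a. simpl in W2a.
          apply walk_snoc in W2a. destruct W2a as [W2b Rl].
          split.
          - replace (s ++ z :: rev u) with ((s ++ [z]) ++ rev u) by (rewrite <- app_assoc; reflexivity).
            apply walk_app. rewrite last_last. auto.
          - rewrite last_app, last_cons. auto. }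
        destruct Wc as [Wc Rc].
        apply (Hac a (s ++ z :: rev u)); auto.
        -- constructor.
           ++ intros H. apply in_app_or in H. destruct H as [H|[H|H]].
              ** apply Na1. rewrite E1. apply in_or_app; auto.
              ** apply Na1. rewrite E1. apply in_or_app; right; left; auto.
              ** apply Na2. rewrite E2. apply in_or_app; left. apply in_rev; auto.
           ++ apply NoDup_app.
              ** rewrite E1 in N1'. apply NoDup_app_remove_r in N1'. auto.
              ** rewrite E2 in N2'. constructor.
                 --- intros H. apply (NoDup_remove_2 _ _ _ N2'). apply in_or_app. left. apply in_rev; auto.
                 --- apply NoDup_rev. apply NoDup_app_remove_r in N2'. auto.
              ** intros y Hy H. apply (D y Hy). rewrite E2. apply in_or_app.
                 destruct H as [<-|H]; [right; left; auto| left; apply in_rev; auto].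
        -- rewrite length_app. simpl. rewrite length_rev.
           destruct s as [|y s]; [|simpl; lia].
           destruct u as [|y u]; [|simpl; lia].
           exfalso. simpl in E1, E2. unfold m1, m2 in E1, E2. injection E1; injection E2; intros; subst. auto.
Qed.

Lemma app_cmp {X} (a b c e : list X) : a ++ b = c ++ e -> length a <= length c ->
  exists s, c = a ++ s /\ b = s ++ e.
Proof.
  revert c; induction a as [|x a IH]; intros c E Hl.
  - exists c. auto.
  - destruct c as [|y c]; simpl in Hl; [lia|].
    simpl in E. injection E; intros E2 E1; subst.
    destruct (IH c E2) as [s [H1 H2]]; [lia|]. exists s. subst. auto.
Qed.

Lemma nat_min_ex (P : nat -> Prop) n : P n -> exists m, P m /\ forall k, P k -> m <= k.
Proof.
  revert P. induction n as [n IH] using lt_wf_ind. intros P Hn.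
  destruct (classic (exists k, P k /\ k < n)) as [[k [Hk Hlt]]|Hno].
  - apply (IH k Hlt P Hk).
  - exists n. split; auto. intros k Hk. destruct (le_lt_dec n k); auto. exfalso; eauto.
Qed.

Section Rooted.
Context {X : Type} (R : X -> X -> Prop) (Hs : forall u v, R u v -> R v u) (Hac : acyclic R)
  (Hconn : connected_on R (fun _ => True)) (r : X).

Definition pth_spec (x : X) (m : list X) := walk R (r :: m) /\ NoDup (r :: m) /\ last m r = x.

Lemma pth_ex x : exists m, pth_spec x m.
Proof.
  destruct (Hconn r x I I) as [p [W [_ L]]].
  destruct (shorten R p r W) as [q [Wq [Nq [Lq _]]]].
  exists q. unfold pth_spec. rewrite Lq. auto.
Qed.

Definition pth x : list X := proj1_sig (constructive_indefinite_description _ (pth_ex x)).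

Lemma pth_ok x : pth_spec x (pth x).
Proof. unfold pth. destruct (constructive_indefinite_description _ _). auto. Qed.

Lemma pth_uniq x m : pth_spec x m -> m = pth x.
Proof.
  intros [W [N L]]. destruct (pth_ok x) as [W' [N' L']].
  apply (path_unique R Hs Hac m r); auto. congruence.
Qed.

Lemma pth_end x : last (pth x) r = x.
Proof. apply (pth_ok x). Qed.

Definition dp x := length (pth x).

Lemma pth_r : pth r = [].
Proof. symmetry. apply pth_uniq. split; [simpl; auto|split; [repeat constructor; auto|reflexivity]]. Qed.

Lemma onpath z x : In z (r :: pth x) -> exists m2, pth x = pth z ++ m2.
Proof.
  intros [<-|Hz].
  - rewrite pth_r. exists (pth x). auto.
  - destruct (in_split _ _ Hz) as [m1 [m2 E]].
    destruct (pth_ok x) as [W [N L]]. rewrite E in W, N.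
    assert (Hz' : m1 ++ [z] = pth z).
    { apply pth_uniq. split; [|split].
      - replace (m1 ++ z :: m2) with ((m1 ++ [z]) ++ m2) in W by (rewrite <- app_assoc; auto).
        apply walk_app in W. tauto.
      - replace (r :: m1 ++ z :: m2) with ((r :: m1 ++ [z]) ++ m2) in N by (simpl; rewrite <- app_assoc; auto).
        apply NoDup_app_remove_r in N. auto.
      - apply last_last. }
    exists m2. rewrite E, <- Hz', <- app_assoc. reflexivity.
Qed.

Section Decomp.
Context {V : Type} (B : X -> V -> Prop)
  (Hbag : forall v, (exists x, B x v) /\ connected_on R (fun x => B x v)).

Lemma top_ex v : exists t, B t v /\ forall y, B y v -> dp t <= dp y.
Proof.
  destruct (proj1 (Hbag v)) as [x Hx].
  destruct (nat_min_ex (fun n => exists y, B y v /\ dp y = n) (dp x)) as [m [[t [Ht Hm]] Hmin]]; eauto.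
  exists t. split; auto. intros y Hy. subst. apply Hmin. eauto.
Qed.

Definition top v : X := proj1_sig (constructive_indefinite_description _ (top_ex v)).

Lemma top_ok v : B (top v) v /\ forall y, B y v -> dp (top v) <= dp y.
Proof. unfold top. destruct (constructive_indefinite_description _ _). auto. Qed.

Lemma lemT v y : B y v -> exists m2, pth y = pth (top v) ++ m2 /\ Forall (fun z => B z v) m2.
Proof.
  intros Hy. destruct (top_ok v) as [Ht Hmin]. set (t := top v) in *.
  destruct (proj2 (Hbag v) t y Ht Hy) as [p [W [F L]]].
  destruct (shorten R p t W) as [q [Wq [Nq [Lq Iq]]]].
  assert (Fq : Forall (fun z => B z v) q).
  { apply Forall_forall. intros z Hz. apply (proj1 (Forall_forall _ _) F). auto. }
  destruct (classic (exists z, In z (r :: pth t) /\ In z q)) as [[z [Hz1 Hz2]]|Hno].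
  - exfalso. destruct (onpath z t Hz1) as [m2 E].
    assert (Bz : B z v) by (apply (proj1 (Forall_forall _ _) Fq); auto).
    destruct m2 as [|a m2].
    + rewrite app_nil_r in E. assert (t = z).
      { rewrite <- (pth_end t), <- (pth_end z), E. auto. }
      subst. inversion Nq; auto.
    + specialize (Hmin z Bz). unfold dp in Hmin. rewrite E, length_app in Hmin. simpl in Hmin. lia.
  - exists q. split; auto. symmetry. apply pth_uniq. destruct (pth_ok t) as [W' [N' L']].
    split; [|split].
    + apply walk_app. rewrite L'. auto.
    + change (NoDup ((r :: pth t) ++ q)). apply NoDup_app; auto.
      * inversion Nq; auto.
      * intros a Ha Hq. apply Hno. eauto.
    + rewrite last_app, L'. rewrite Lq. auto.
Qed.

Lemma key x u w : B x u -> B x w -> dp (top u) <= dp (top w) -> B (top w) u.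
Proof.
  intros Hu Hw Hle.
  destruct (lemT u x Hu) as [mu [Eu Fu]]. destruct (lemT w x Hw) as [mw [Ew Fw]].
  rewrite Ew in Eu. destruct (app_cmp _ _ _ _ (eq_sym Eu) Hle) as [s [E1 E2]].
  destruct s as [|a s].
  - rewrite app_nil_r in E1. assert (top w = top u).
    { rewrite <- (pth_end (top w)), <- (pth_end (top u)), E1. auto. }
    rewrite H. apply top_ok.
  - rewrite <- (pth_end (top w)), E1, last_app.
    apply (proj1 (Forall_forall _ _) Fu). rewrite E2. apply in_or_app. left. apply last_in.
Qed.

End Decomp.
End Rooted.

Definition vis (c : list nat -> nat) (v w : list nat) : Prop :=
  prefix v w /\ forall u, prefix v u -> prefix u w -> u <> v -> c u <> c v.

Lemma prefix_snoc u p (x : nat) : prefix u (p ++ [x]) -> u = p ++ [x] \/ prefix u p.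
Proof.
  intros [t E]. destruct t as [|z t0] eqn:Et; [left; rewrite app_nil_r in E; auto|].
  destruct (exists_last (l:=z :: t0) ltac:(congruence)) as [t' [y Ey]]. rewrite Ey in E. clear Et Ey.
  right. rewrite app_assoc in E. apply app_inj_tail in E. destruct E as [E _]. exists t'. auto.
Qed.

Lemma prefix_refl (v : list nat) : prefix v v.
Proof. exists []. rewrite app_nil_r. auto. Qed.

Lemma prefix_antisym (u v : list nat) : prefix u v -> prefix v u -> u = v.
Proof.
  intros [t1 E1] [t2 E2]. subst. rewrite <- app_assoc in E2.
  assert (length (t1 ++ t2) = 0).
  { apply (f_equal (@length nat)) in E2. rewrite length_app in E2. lia. }
  destruct t1; [rewrite app_nil_r; auto|simpl in H; lia].
Qed.

Lemma vis_refl c v : vis c v v.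
Proof.
  split; [apply prefix_refl|]. intros u H1 H2 H3. exfalso. apply H3. apply prefix_antisym; auto.
Qed.

Lemma visext c v p x : vis c v p -> c (p ++ [x]) <> c v -> vis c v (p ++ [x]).
Proof.
  intros [[t E] H] Hc. split.
  - exists (t ++ [x]). subst. rewrite app_assoc. auto.
  - intros u H1 H2 H3. destruct (prefix_snoc _ _ _ H2) as [->|H2']; auto.
Qed.

Lemma vis_arc c v w : vis c v w -> v <> w -> Tk_arc c v w.
Proof.
  intros [[t E] H] Hne. split; auto. exists t. split; auto. intros ->. apply Hne. rewrite E, app_nil_r. auto.
Qed.

Lemma free_col (l : list nat) k : length l <= k -> exists j, j <= k /\ ~ In j l.
Proof.
  intros Hl. apply NNPP. intros Hno.
  assert (incl (seq 0 (S k)) l).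
  { intros j Hj. apply in_seq in Hj. apply NNPP. intros Hn. apply Hno. exists j. split; [lia|auto]. }
  pose proof (NoDup_incl_length (seq_NoDup (S k) 0) H). rewrite length_seq in H0. lia.
Qed.

Lemma lmax_ex {A} (lt : A -> A -> Prop) (Htr : forall a b c, lt a b -> lt b c -> lt a c)
  (Htot : forall a b, a = b \/ lt a b \/ lt b a) (l : list A) :
  l <> [] -> exists m, In m l /\ forall y, In y l -> y = m \/ lt y m.
Proof.
  induction l as [|a l IH]; intros Hne; [congruence|].
  destruct l as [|b l].
  - exists a. split; [left; auto|]. intros y [<-|[]]; auto.
  - destruct IH as [m [Hm Hmax]]; [congruence|].
    destruct (Htot a m) as [<-|[Ham|Hma]].
    + exists a. split; [left; auto|]. intros y [<-|Hy]; auto.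
    + exists m. split; [right; auto|]. intros y [<-|Hy]; auto.
    + exists a. split; [left; auto|]. intros y [<-|Hy]; auto.
      destruct (Hmax y Hy) as [->|H]; eauto.
Qed.

Lemma filter_len_lt {A} (f : A -> bool) l w : In w l -> f w = false -> length (filter f l) < length l.
Proof.
  induction l as [|a l IH]; intros Hin Hf; [destruct Hin|].
  simpl. destruct Hin as [->|Hin].
  - rewrite Hf. pose proof (filter_length_le f l). simpl. lia.
  - specialize (IH Hin Hf). destruct (f a); simpl; lia.
Qed.

Section Children.
Context (c : list nat -> nat).

Definition nextc (p : list nat) (j N : nat) : nat :=
  match excluded_middle_informative (exists x, N <= x /\ c (p ++ [x]) = j) with
  | left H => proj1_sig (constructive_indefinite_description _ H)
  | right _ => N
  end.

Lemma nextc_ge p j N : N <= nextc p j N.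
Proof.
  unfold nextc. destruct excluded_middle_informative as [H|H]; auto.
  destruct (constructive_indefinite_description _ H) as [x Hx]. simpl. apply Hx.
Qed.

Lemma nextc_col p j N : (exists x, N <= x /\ c (p ++ [x]) = j) -> c (p ++ [nextc p j N]) = j.
Proof.
  intros Hex. unfold nextc. destruct excluded_middle_informative as [H|H]; [|contradiction].
  destruct (constructive_indefinite_description _ H) as [x Hx]. simpl. apply Hx.
Qed.

Fixpoint ech (p : list nat) (j n : nat) : nat :=
  match n with
  | 0 => nextc p j 0
  | S n => nextc p j (S (ech p j n))
  end.

Lemma ech_mono p j n m : n < m -> ech p j n < ech p j m.
Proof.
  induction m as [|m IH]; intros H; [lia|].
  simpl. pose proof (nextc_ge p j (S (ech p j m))).
  destruct (Nat.eq_dec n m) as [->|Hne]; [lia|]. specialize (IH ltac:(lia)). lia.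
Qed.

Lemma ech_inj p j n m : ech p j n = ech p j m -> n = m.
Proof.
  intros E. destruct (lt_eq_lt_dec n m) as [[H|H]|H]; auto;
  apply (ech_mono p j) in H; lia.
Qed.

Lemma ech_col p j n : (forall N, exists x, N <= x /\ c (p ++ [x]) = j) -> c (p ++ [ech p j n]) = j.
Proof. intros H. destruct n; simpl; apply nextc_col; auto. Qed.

End Children.

Section Embed.
Context (k : nat) (c : list nat -> nat) (Hc : good_colouring k c)
  {V : Type} (adj : V -> V -> Prop) (Hsimp : simple_graph adj)
  (idx : V -> nat) (Hidx : forall u v, idx u = idx v -> u = v)
  {X : Type} (R : X -> X -> Prop) (Hs : forall u v, R u v -> R v u) (Hac : acyclic R)
  (Hconn : connected_on R (fun _ => True)) (r : X)
  (B : X -> V -> Prop) (Hbag : forall v, (exists x, B x v) /\ connected_on R (fun x => B x v))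
  (Hedge : forall u v, adj u v -> exists x, B x u /\ B x v)
  (Hbb : bags_bounded B k).

Definition tp v := top R Hconn r B Hbag v.
Definition dt v := dp R Hconn r (tp v).
Definition ltv u w := dt u < dt w \/ (dt u = dt w /\ idx u < idx w).

Lemma ltv_acc n m w : dt w = n -> idx w = m -> Acc ltv w.
Proof.
  revert m w. induction n as [n IHn] using lt_wf_ind. intros m.
  induction m as [m IHm] using lt_wf_ind. intros w E1 E2.
  constructor. intros u [H|[H1 H2]].
  - subst. eapply IHn; eauto.
  - subst. eapply IHm; eauto.
Qed.

Lemma ltv_wf : well_founded ltv.
Proof. intros w. eapply ltv_acc; eauto. Qed.

Lemma ltv_trans a b d : ltv a b -> ltv b d -> ltv a d.
Proof. unfold ltv. lia. Qed.

Lemma ltv_irr a : ~ ltv a a.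
Proof. unfold ltv. lia. Qed.

Lemma ltv_tot a b : a = b \/ ltv a b \/ ltv b a.
Proof.
  unfold ltv. destruct (lt_eq_lt_dec (dt a) (dt b)) as [[H|H]|H]; [tauto| |tauto].
  destruct (lt_eq_lt_dec (idx a) (idx b)) as [[H'|H']|H']; [tauto| |right; right; right; split; [symmetry|]; auto].
  left. apply Hidx. auto.
Qed.

Definition bagl x : list V := proj1_sig (constructive_indefinite_description _ (Hbb x)).

Lemma bagl_ok x : length (bagl x) <= k + 1 /\ forall v, B x v -> In v (bagl x).
Proof. unfold bagl. destruct (constructive_indefinite_description _ (Hbb x)) as [l Hl]. simpl. auto. Qed.

Definition Al w : list V :=
  filter (fun u => if excluded_middle_informative (B (tp w) u /\ ltv u w) then true else false) (bagl (tp w)).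

Lemma Al_spec w u : In u (Al w) <-> B (tp w) u /\ ltv u w.
Proof.
  unfold Al. rewrite filter_In. destruct excluded_middle_informative as [H|H]; split.
  - tauto.
  - intros H'. split; auto. apply bagl_ok. tauto.
  - intros [_ E]; discriminate.
  - tauto.
Qed.

Lemma tp_ok w : B (tp w) w.
Proof. apply (top_ok R Hconn r B Hbag w). Qed.

Lemma Al_len w : length (Al w) <= k.
Proof.
  pose proof (proj1 (bagl_ok (tp w))).
  assert (length (Al w) < length (bagl (tp w))); [|lia].
  apply filter_len_lt with w.
  - apply bagl_ok. apply tp_ok.
  - destruct excluded_middle_informative as [[_ H']|_]; auto. exfalso. apply (ltv_irr w). auto.
Qed.

Definition ismax w u := In u (Al w) /\ forall u', In u' (Al w) -> u' = u \/ ltv u' u.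

Lemma max_ex w : Al w <> [] -> exists u, ismax w u.
Proof. intros H. apply (lmax_ex ltv ltv_trans ltv_tot). auto. Qed.

Lemma P2 w u u' : ismax w u -> In u' (Al w) -> u' <> u -> In u' (Al u).
Proof.
  intros [Hu Hmax] Hu' Hne. destruct (Hmax u' Hu') as [->|Hlt]; [congruence|].
  apply Al_spec. split; auto.
  apply Al_spec in Hu. apply Al_spec in Hu'.
  apply (key R Hs Hac Hconn r B Hbag (tp w) u' u); try tauto.
  unfold ltv, dt, tp in Hlt. lia.
Qed.

Definition colour w (g : V -> list nat) : nat :=
  match excluded_middle_informative (exists j, j <= k /\ ~ In j (map (fun u => c (g u)) (Al w))) with
  | left H => proj1_sig (constructive_indefinite_description _ H)
  | right _ => 0
  end.

Lemma colour_ok w g : colour w g <= k /\ ~ In (colour w g) (map (fun u => c (g u)) (Al w)).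
Proof.
  unfold colour. destruct excluded_middle_informative as [H|H].
  - destruct (constructive_indefinite_description _ H) as [j Hj]. simpl. auto.
  - exfalso. apply H. apply free_col. rewrite length_map. apply Al_len.
Qed.

Definition G w (g : V -> list nat) : list nat :=
  match excluded_middle_informative (exists u, ismax w u) with
  | left H => let u := proj1_sig (constructive_indefinite_description _ H) in
              g u ++ [ech c (g u) (colour w g) (idx w)]
  | right _ => [idx w]
  end.

Definition Fst w (rec : forall u, ltv u w -> list nat) : list nat :=
  G w (fun u => match excluded_middle_informative (ltv u w) with left H => rec u H | right _ => [] end).

Definition emb : V -> list nat := Fix ltv_wf (fun _ => list nat) Fst.

Definition gw w u := match excluded_middle_informative (ltv u w) with left _ => emb u | right _ => [] end.

Lemma emb_eq w : emb w = G w (gw w).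
Proof.
  unfold emb. rewrite Fix_eq.
  - unfold Fst, gw. reflexivity.
  - intros x f1 f2 Hf. unfold Fst. f_equal. apply functional_extensionality. intros u.
    destruct excluded_middle_informative; auto.
Qed.

Lemma gw_lt w u : ltv u w -> gw w u = emb u.
Proof. intros H. unfold gw. destruct excluded_middle_informative; tauto. Qed.

Lemma emb_shape w :
  (Al w = [] /\ emb w = [idx w]) \/
  (exists u j, ismax w u /\ j <= k /\ ~ In j (map (fun u' => c (emb u')) (Al w)) /\
     emb w = emb u ++ [ech c (emb u) j (idx w)] /\ c (emb u ++ [ech c (emb u) j (idx w)]) = j).
Proof.
  rewrite emb_eq. unfold G. destruct excluded_middle_informative as [H|H].
  - right. destruct (constructive_indefinite_description _ H) as [u Hu]. simpl.
    assert (Hlt : ltv u w) by (apply Al_spec; apply Hu).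
    assert (Hmap : map (fun u' => c (gw w u')) (Al w) = map (fun u' => c (emb u')) (Al w)).
    { apply map_ext_in. intros a Ha. rewrite gw_lt; auto. apply Al_spec in Ha. tauto. }
    destruct (colour_ok w (gw w)) as [C1 C2]. rewrite Hmap in C2.
    rewrite gw_lt; auto.
    exists u, (colour w (gw w)). split; [auto|split; [auto|split; [auto|split; [reflexivity|]]]].
    apply ech_col. intros N. apply (proj2 Hc); auto.
    intros E. apply C2. rewrite E. apply in_map_iff. exists u. split; auto. apply Hu.
  - left. split; auto. destruct (Al w) eqn:E; auto. exfalso. apply H. apply max_ex. rewrite E. congruence.
Qed.

Lemma emb_inv w : forall u, In u (Al w) -> vis c (emb u) (emb w).
Proof.
  induction w as [w IH] using (well_founded_ind ltv_wf).
  intros u' Hu'. destruct (emb_shape w) as [[E _]|[u [j [Hm [Hj [Hn [E Hcol]]]]]]].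
  - rewrite E in Hu'. destruct Hu'.
  - rewrite E. apply visext.
    + destruct (classic (u' = u)) as [->|Hne]; [apply vis_refl|].
      apply IH; [apply Al_spec; apply Hm|]. apply (P2 w); auto.
    + rewrite Hcol. intros Ej. apply Hn. rewrite Ej. apply (in_map (fun u0 => c (emb u0))). auto.
Qed.

Lemma emb_ne w : emb w <> [].
Proof.
  destruct (emb_shape w) as [[_ E]|[u [j [_ [_ [_ [E _]]]]]]]; rewrite E; [congruence|].
  intros H. apply app_eq_nil in H. destruct H; congruence.
Qed.

Lemma emb_inj w1 w2 : emb w1 = emb w2 -> w1 = w2.
Proof.
  intros H.
  destruct (emb_shape w1) as [[_ E1]|[u1 [j1 [_ [_ [_ [E1 C1]]]]]]];
  destruct (emb_shape w2) as [[_ E2]|[u2 [j2 [_ [_ [_ [E2 C2]]]]]]]; rewrite E1, E2 in H.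
  - injection H. apply Hidx.
  - exfalso. apply (f_equal (@length nat)) in H. rewrite length_app in H. simpl in H.
    pose proof (emb_ne u2). destruct (emb u2); simpl in *; [congruence|lia].
  - exfalso. apply (f_equal (@length nat)) in H. rewrite length_app in H. simpl in H.
    pose proof (emb_ne u1). destruct (emb u1); simpl in *; [congruence|lia].
  - apply app_inj_tail in H. destruct H as [Hp Hx]. rewrite Hp in C1, Hx.
    rewrite Hx in C1. rewrite C1 in C2. subst j2.
    apply ech_inj in Hx. apply Hidx. auto.
Qed.

Lemma emb_edge u w : adj u w -> Tk_adj c (emb u) (emb w).
Proof.
  intros Ha. assert (Hne : u <> w) by (intros ->; apply (proj2 Hsimp w); auto).
  destruct (Hedge u w Ha) as [x [Bu Bw]].
  assert (Hne' : emb u <> emb w) by (intros E; apply Hne; apply emb_inj; auto).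
  destruct (ltv_tot u w) as [->|[Hl|Hl]]; [congruence| |].
  - left. apply vis_arc; auto. apply emb_inv. apply Al_spec. split; auto.
    apply (key R Hs Hac Hconn r B Hbag x u w); auto. unfold ltv, dt, tp in Hl. lia.
  - right. apply vis_arc; auto. apply emb_inv. apply Al_spec. split; auto.
    apply (key R Hs Hac Hconn r B Hbag x w u); auto. unfold ltv, dt, tp in Hl. lia.
Qed.

End Embed.

Lemma hmax_ex {X} (h : X -> nat) (l : list X) : l <> [] -> exists m, In m l /\ forall y, In y l -> h y <= h m.
Proof.
  induction l as [|a l IH]; intros Hne; [congruence|].
  destruct l as [|b l].
  - exists a. split; [left; auto|]. intros y [<-|[]]; auto.
  - destruct IH as [m [Hm Hmax]]; [congruence|].
    destruct (le_lt_dec (h a) (h m)).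
    + exists m. split; [right; auto|]. intros y [<-|Hy]; auto.
    + exists a. split; [left; auto|]. intros y [<-|Hy]; auto. specialize (Hmax y Hy). lia.
Qed.

Lemma gacyc {X} (R : X -> X -> Prop) (h : X -> nat) (Hs : forall u v, R u v -> R v u)
  (Hneq : forall a b, R a b -> h a <> h b)
  (Huniq : forall a a' b, R a b -> R a' b -> h a < h b -> h a' < h b -> a = a') : acyclic R.
Proof.
  intros x p N Hlen W Rc.
  assert (CW : walk R (x :: p ++ [x])) by (apply walk_snoc; auto).
  destruct (hmax_ex h (x :: p)) as [m [Hm Hmax]]; [congruence|].
  destruct (in_split _ _ Hm) as [u [v E]].
  assert (Hrot : exists q, walk R (m :: q ++ [m]) /\ NoDup (m :: q) /\ length q = length p /\ incl q (x :: p)).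
  { destruct u as [|x' u'].
    - simpl in E. injection E; intros; subst. exists v. repeat split; auto. intros y Hy; right; auto.
    - simpl in E. injection E; intros E2 E1; subst x' p.
      exists (v ++ x :: u'). split; [|split; [|split]].
      + replace (x :: (u' ++ m :: v) ++ [x]) with (x :: (u' ++ [m]) ++ (v ++ [x])) in CW
          by (simpl; rewrite <- !app_assoc; reflexivity).
        apply walk_app in CW. destruct CW as [C1 C2]. rewrite last_last in C2.
        replace (m :: (v ++ x :: u') ++ [m]) with (m :: (v ++ [x]) ++ (u' ++ [m]))
          by (rewrite <- !app_assoc; reflexivity).
        apply walk_app. split; auto. rewrite last_last. auto.
      + apply (Permutation_NoDup (l := (x :: u') ++ (m :: v))); auto.
        apply Permutation_app_comm.
      + rewrite !length_app. simpl. lia.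
      + intros y Hy. apply in_app_or in Hy. destruct Hy as [Hy|[<-|Hy]]; [| left; auto|];
        right; apply in_or_app; [right; right|left]; auto. }
  destruct Hrot as [q [Wq [Nq [Lq Iq]]]].
  destruct q as [|a q']; [simpl in Lq; lia|].
  apply walk_snoc in Wq. destruct Wq as [Wq Rl].
  destruct Wq as [Rma _].
  assert (Ha : h a < h m).
  { pose proof (Hmax a (Iq a (or_introl eq_refl))). pose proof (Hneq m a Rma). lia. }
  assert (Hb : h (last (a :: q') m) < h m).
  { pose proof (Hmax _ (Iq _ (last_in a q' m))). pose proof (Hneq _ _ Rl). lia. }
  pose proof (Huniq _ _ _ (Hs _ _ Rma) Rl Ha Hb) as Hab.
  rewrite last_cons in Hab.
  destruct q' as [|b q'']; [simpl in Lq; lia|].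
  inversion Nq; subst. inversion H2; subst. apply H3. rewrite Hab at 1. apply last_in.
Qed.

Definition treeR (a b : list nat) : Prop := (exists x, b = a ++ [x]) \/ (exists x, a = b ++ [x]).

Lemma wk_mono {X} (R : X -> X -> Prop) (S S' : X -> Prop) x y :
  (forall z, S z -> S' z) -> wk R S x y -> wk R S' x y.
Proof.
  intros H [p [W [F L]]]. exists p. split; auto. split; auto. eapply Forall_impl; eauto.
Qed.

Lemma prefix_trans (a b d : list nat) : prefix a b -> prefix b d -> prefix a d.
Proof. intros [t1 ->] [t2 ->]. exists (t1 ++ t2). rewrite app_assoc. auto. Qed.

Lemma down v t : wk treeR (fun u => prefix v u /\ prefix u (v ++ t)) v (v ++ t).
Proof.
  induction t as [|x t IH] using rev_ind.
  - rewrite app_nil_r. apply wk_refl.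
  - apply wk_trans with (v ++ t).
    + eapply wk_mono; [|exact IH]. intros z [H1 H2]. split; auto.
      eapply prefix_trans; [exact H2|]. exists [x]. rewrite app_assoc. auto.
    + apply wk_step.
      * left. exists x. rewrite app_assoc. auto.
      * split; [exists (t ++ [x]); auto|apply prefix_refl].
Qed.

Lemma treeR_sym a b : treeR a b -> treeR b a.
Proof. unfold treeR. tauto. Qed.

Lemma treeR_tree : is_tree treeR.
Proof.
  split; [constructor; exact []|]. split; [split|split].
  - apply treeR_sym.
  - intros v [[x E]|[x E]]; apply (f_equal (@length nat)) in E; rewrite length_app in E; simpl in E; lia.
  - intros x y _ _. change (wk treeR (fun _ => True) x y).
    apply wk_trans with ([] : list nat).
    + apply wk_sym; auto. exact treeR_sym. eapply wk_mono; [|apply (down [] x)]. auto.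
    + eapply wk_mono; [|apply (down [] y)]. auto.
  - apply (gacyc treeR (@length nat) treeR_sym).
    + intros a b [[x E]|[x E]]; subst; rewrite length_app; simpl; lia.
    + intros a a' b [[x E]|[x E]] [[x' E']|[x' E']] H1 H2; subst;
      rewrite ?length_app in *; simpl in *; try lia.
      apply app_inj_tail in E'. tauto.
Qed.

Fixpoint prefixes (w : list nat) : list (list nat) :=
  match w with
  | [] => [[]]
  | a :: w => [] :: map (cons a) (prefixes w)
  end.

Lemma prefixes_in u w : prefix u w -> In u (prefixes w).
Proof.
  revert u; induction w as [|a w IH]; intros u [t E].
  - destruct u; [left; auto|discriminate].
  - destruct u as [|b u]; [left; auto|]. simpl in E. injection E; intros E2 E1; subst.
    right. apply in_map. apply IH. exists t. auto.
Qed.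

Lemma prefix_cmp u1 u2 w : prefix u1 w -> prefix u2 w -> prefix u1 u2 \/ prefix u2 u1.
Proof.
  intros [t1 E1] [t2 E2]. rewrite E1 in E2.
  destruct (le_lt_dec (length u1) (length u2)).
  - left. destruct (app_cmp _ _ _ _ E2 l) as [s [H _]]. exists s. auto.
  - right. destruct (app_cmp _ _ _ _ (eq_sym E2) ltac:(lia)) as [s [H _]]. exists s. auto.
Qed.

Lemma vis_inj c w u1 u2 : vis c u1 w -> vis c u2 w -> c u1 = c u2 -> u1 = u2.
Proof.
  intros H1 H2 E. destruct (prefix_cmp u1 u2 w (proj1 H1) (proj1 H2)) as [P|P].
  - apply NNPP. intros Hne. apply (proj2 H1 u2 P (proj1 H2)); auto.
  - apply NNPP. intros Hne. apply (proj2 H2 u1 P (proj1 H1)); auto.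
Qed.

Theorem part1 k c : good_colouring k c -> treewidth_le (Tk_adj c) k.
Proof.
  intros [Hk _]. exists (list nat), treeR, (fun w v => vis c v w). split; [split; [|split]|].
  - apply treeR_tree.
  - intros u v [H|H].
    + exists v. split; [|apply vis_refl]. destruct H as [[t [_ E]] H]. split; auto. exists t; auto.
    + exists u. split; [apply vis_refl|]. destruct H as [[t [_ E]] H]. split; auto. exists t; auto.
  - intros v. split; [exists v; apply vis_refl|].
    assert (Hub : forall w, vis c v w -> wk treeR (fun x => vis c v x) v w).
    { intros w Hw. destruct Hw as [[t E] Hw']. subst w. eapply wk_mono; [|apply (down v t)].
      intros z [P1 P2]. split; auto. intros u Q1 Q2 Q3. apply Hw'; auto. eapply prefix_trans; eauto. }
    intros x y Hx Hy. change (wk treeR (fun x => vis c v x) x y).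
    apply wk_trans with v; [|apply Hub; auto].
    apply wk_sym; [exact treeR_sym|exact (vis_refl c v)|]. apply Hub; auto.
  - intros w.
    set (l := nodup (list_eq_dec Nat.eq_dec)
                (filter (fun u => if excluded_middle_informative (vis c u w) then true else false) (prefixes w))).
    assert (Hl : forall u, In u l <-> vis c u w).
    { intros u. unfold l. rewrite nodup_In, filter_In.
      destruct excluded_middle_informative as [H|H]; split; try tauto.
      - intros _. split; auto. apply prefixes_in. apply H.
      - intros [_ E]; discriminate. }
    exists l. split; [|intros v; apply Hl].
    assert (ND : NoDup (map c l)).
    { apply NoDup_map_NoDup_ForallPairs; [|apply NoDup_nodup].
      intros a b Ha Hb E. apply (vis_inj c w); auto; apply Hl; auto. }
    assert (IN : incl (map c l) (seq 0 (S k))).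
    { intros j Hj. apply in_map_iff in Hj. destruct Hj as [u [<- _]]. apply in_seq. specialize (Hk u). lia. }
    pose proof (NoDup_incl_length ND IN). rewrite length_map, length_seq in H. lia.
Qed.

Theorem mainTheorem11 :
  forall (k : nat) (c : list nat -> nat), good_colouring k c ->
    treewidth_le (Tk_adj c) k /\
    (forall (V : Type) (adj : V -> V -> Prop),
        simple_graph adj -> countable_type V -> treewidth_le adj k ->
        contains (Tk_adj c) adj).
Proof.
  intros k c Hc. split; [apply part1; auto|].
  intros V adj Hsimp [idx Hidx] [X [R [B [[Htree [Hedge Hbag]] Hbb]]]].
  destruct Htree as [[r] [[Hs _] [Hconn Hac]]].
  exists (emb k c idx R Hconn r B Hbag Hbb). split.
  - apply (emb_inj k c Hc idx Hidx R Hconn r B Hbag Hbb).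
  - apply (emb_edge k c Hc adj Hsimp idx Hidx R Hs Hac Hconn r B Hbag Hedge Hbb).
Qed.
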